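(* If $\varphi\in\mathrm{sHML}_F$ (resp. $\varphi\in\mathrm{cHML}_F$) is closed, then there is some $\psi\in\mathrm{sHML}$ (resp. $\psi\in\mathrm{cHML}$) such that $[\![\psi]\!]_F=[\![\varphi]\!]_F$.
   Context: Fix a finite set $\mathrm{Act}$ of actions. recHML formulae: $\varphi::=\mathrm{tt}\mid\mathrm{ff}\mid\varphi\vee\varphi\mid\varphi\wedge\varphi\mid\langle A\rangle\varphi\mid[A]\varphi\mid\min X.\varphi\mid\max X.\varphi\mid X$ ($A\subseteq\mathrm{Act}$), guarded. Fragments: $\mathrm{sHML}_F$: $\varphi::=\mathrm{tt}\mid\mathrm{ff}\mid[A]\varphi\mid\varphi\vee\varphi\mid\varphi\wedge\varphi\mid\max X.\varphi\mid X$; $\mathrm{cHML}_F$: $\varphi::=\mathrm{tt}\mid\mathrm{ff}\mid\langle A\rangle\varphi\mid\varphi\vee\varphi\mid\varphi\wedge\varphi\mid\min X.\varphi\mid X$; $\mathrm{sHML}$: $\varphi::=\mathrm{tt}\mid\mathrm{ff}\mid[A]\varphi\mid\varphi\wedge\varphi\mid\max X.\varphi\mid X$; $\mathrm{cHML}$: $\varphi::=\mathrm{tt}\mid\mathrm{ff}\mid\langle A\rangle\varphi\mid\varphi\vee\varphi\mid\min X.\varphi\mid X$. Finfinite traces $\mathrm{Fin}=\mathrm{Act}^\omega\cup\mathrm{Act}^*$; finfinite semantics: $[\![\mathrm{tt}]\!]_F=\mathrm{Fin}$, $[\![\mathrm{ff}]\!]_F=\emptyset$, $\vee,\wedge$ union/intersection,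 $[\![\langle A\rangle\varphi,\sigma]\!]_F=\{ag\mid a\in A,g\in[\![\varphi,\sigma]\!]_F\}$, $[\![[A]\varphi,\sigma]\!]_F=\{g\mid\forall a\in A,\forall g'.\ g=ag'\Rightarrow g'\in[\![\varphi,\sigma]\!]_F\}$, $\min/\max$ as least/greatest fixpoints, $[\![X,\sigma]\!]_F=\sigma(X)$. *)

(* Defs.v *)
From mathcomp Require Import all_boot.
Set Implicit Arguments. Unset Strict Implicit. Unset Printing Implicit Defensive.

Section RecHML.
Variable Act : finType.

(* Finfinite traces Fin = Act^omega U Act^*: possibly-finite, possibly-infinite
   sequences, i.e. coinductive lists. *)
CoInductive trace : Type :=
| tnil : trace
| tcons : Act -> trace -> trace.

Inductive form : Type :=
| Ftt : form
| Fff : form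
| For : form -> form -> form
| Fand : form -> form -> form
| Fdia : {set Act} -> form -> form
| Fbox : {set Act} -> form -> form
| Fmin : nat -> form -> form
| Fmax : nat -> form -> form
| Fvar : nat -> form.

Fixpoint free_in (X : nat) (f : form) : Prop :=
  match f with
  | Ftt | Fff => False
  | For f1 f2 | Fand f1 f2 => free_in X f1 \/ free_in X f2
  | Fdia _ f1 | Fbox _ f1 => free_in X f1
  | Fmin Y f1 | Fmax Y f1 => Y <> X /\ free_in X f1
  | Fvar Y => Y = X
  end.

Definition closedF (f : form) : Prop := forall X, ~ free_in X f.

Fixpoint guarded_in (X : nat) (f : form) : Prop :=
  match f with
  | Ftt | Fff => True
  | For f1 f2 | Fand f1 f2 => guarded_in X f1 /\ guarded_in X f2
  | Fdia _ _ | Fbox _ _ => True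
  | Fmin Y f1 | Fmax Y f1 => Y = X \/ guarded_in X f1
  | Fvar Y => Y <> X
  end.

Fixpoint guarded (f : form) : Prop :=
  match f with
  | Ftt | Fff | Fvar _ => True
  | For f1 f2 | Fand f1 f2 => guarded f1 /\ guarded f2
  | Fdia _ f1 | Fbox _ f1 => guarded f1
  | Fmin X f1 | Fmax X f1 => guarded_in X f1 /\ guarded f1
  end.

Fixpoint is_sHMLF (f : form) : Prop :=
  match f with
  | Ftt | Fff | Fvar _ => True
  | Fbox _ f1 | Fmax _ f1 => is_sHMLF f1
  | For f1 f2 | Fand f1 f2 => is_sHMLF f1 /\ is_sHMLF f2
  | _ => False
  end.

Fixpoint is_cHMLF (f : form) : Prop :=
  match f with
  | Ftt | Fff | Fvar _ => True
  | Fdia _ f1 | Fmin _ f1 => is_cHMLF f1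
  | For f1 f2 | Fand f1 f2 => is_cHMLF f1 /\ is_cHMLF f2
  | _ => False
  end.

Fixpoint is_sHML (f : form) : Prop :=
  match f with
  | Ftt | Fff | Fvar _ => True
  | Fbox _ f1 | Fmax _ f1 => is_sHML f1
  | Fand f1 f2 => is_sHML f1 /\ is_sHML f2
  | _ => False
  end.

Fixpoint is_cHML (f : form) : Prop :=
  match f with
  | Ftt | Fff | Fvar _ => True
  | Fdia _ f1 | Fmin _ f1 => is_cHML f1
  | For f1 f2 => is_cHML f1 /\ is_cHML f2
  | _ => False
  end.

Definition tset := trace -> Prop.
Definition env := nat -> tset.
Definition upd (s : env) (X : nat) (S : tset) : env :=
  fun Y => if Y == X then S else s Y.
Definition empty_env : env := fun _ _ => False.

(* Finfinite semantics; min/max are the least/greatest fixpoints given by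
   Knaster-Tarski: intersection of pre-fixpoints / union of post-fixpoints. *)
Fixpoint semF (f : form) (s : env) : tset :=
  match f with
  | Ftt => fun _ => True
  | Fff => fun _ => False
  | For f1 f2 => fun g => semF f1 s g \/ semF f2 s g
  | Fand f1 f2 => fun g => semF f1 s g /\ semF f2 s g
  | Fdia A f1 => fun g => exists a g', a \in A /\ g = tcons a g' /\ semF f1 s g'
  | Fbox A f1 => fun g => forall a g', a \in A -> g = tcons a g' -> semF f1 s g'
  | Fmin X f1 => fun g =>
      forall S : tset, (forall h, semF f1 (upd s X S) h -> S h) -> S g
  | Fmax X f1 => fun g =>
      exists S : tset, (forall h, S h -> semF f1 (upd s X S) h) /\ S g
  | Fvar X => s X
  end.

End RecHML.

(* Main.v *)
Require Import Defs.
From mathcomp Require Import all_boot.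
From Stdlib Require Import Classical ClassicalEpsilon.
Set Implicit Arguments. Unset Strict Implicit. Unset Printing Implicit Defensive.

Section Proof.
Variable Act : finType.
Notation trace := (trace Act).
Notation form := (form Act).
Notation tset := (tset Act).
Notation env := (env Act).

Fixpoint fin (w : seq Act) : trace :=
  match w with [::] => tnil Act | a :: w' => tcons a (fin w') end.
Fixpoint app (w : seq Act) (h : trace) : trace :=
  match w with [::] => h | a :: w' => tcons a (app w' h) end.
Fixpoint pre (w : seq Act) (g : trace) : Prop :=
  match w with
  | [::] => True
  | a :: w' => match g with tnil => False | tcons b g' => a = b /\ pre w' g' end
  end.

Lemma pre_fin w : pre w (fin w).
Proof. by elim: w => //= a w ->. Qed.

Lemma pre_app w h : pre w (app w h).
Proof. by elim: w => //= a w ->. Qed.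

Lemma pre_appE w g : pre w g -> exists h, g = app w h.
Proof.
elim: w g => [|a w IH] g /=; first by exists g.
case: g => // b g' [<- /IH [h ->]]; by exists h.
Qed.

Lemma pre_trans u w g : pre u (fin w) -> pre w g -> pre u g.
Proof.
elim: u w g => [|a u IH] [|b w] [|c g] //= [-> H1] [-> H2]; split=> //; exact: IH H1 H2.
Qed.

Lemma pre_cmp u w g : pre u g -> pre w g -> size u <= size w ->
  exists v, w = u ++ v.
Proof.
elim: u w g => [|a u IH] w g /=; first by exists w.
case: w => [|b w]; case: g => // c g [-> H1] [-> H2] /= Hs.
have [v ->] := IH _ _ H1 H2 Hs; by exists v.
Qed.

Lemma pre_cmp_fin u w g : pre u g -> pre w g -> size u <= size w -> pre u (fin w).
Proof.
move=> H1 H2 Hs; have [v ->] := pre_cmp H1 H2 Hs.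
by elim: u {H1 H2 Hs} => //= a u ->.
Qed.

Lemma app_cat u v h : app (u ++ v) h = app u (app v h).
Proof. by elim: u => //= a u ->. Qed.

Definition leE (r r' : env) := forall X g, r X g -> r' X g.

Lemma leE_upd r r' X S S' : leE r r' -> (forall g, S g -> S' g) ->
  leE (upd r X S) (upd r' X S').
Proof. by move=> H HS Y g; rewrite /upd; case: ifP => _; [apply: HS | apply: H]. Qed.

Lemma semF_mono (f : form) : forall r r', leE r r' -> forall g, semF f r g -> semF f r' g.
Proof.
elim: f => [||f1 IH1 f2 IH2|f1 IH1 f2 IH2|A f1 IH|A f1 IH|X f1 IH|X f1 IH|X] r r' H g /=.
- by [].
- by [].
- by case=> [/IH1|/IH2] ; [left|right]; auto.
- by case=> /IH1 H1 /IH2 H2; split; auto.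
- case=> a [g' [Ha [Eg Hg]]]; exists a, g'; split; first exact: Ha. split; first exact: Eg. exact: IH Hg.
- move=> Hb a g' Ha Eg; apply: (IH r r' H); exact: (Hb a g' Ha Eg).
- move=> Hm S HS; apply: Hm => h Hh; apply: HS; apply: (IH (upd r X S)) Hh.
  by apply: leE_upd.
- case=> S [HS Sg]; exists S; split=> // h /HS; apply: IH; exact: leE_upd.
- exact: H.
Qed.

Lemma unfold_max X (f : form) (r : env) g :
  semF (Fmax X f) r g <-> semF f (upd r X (semF (Fmax X f) r)) g.
Proof.
set M := semF (Fmax X f) r.
have H1 : forall g, M g -> semF f (upd r X M) g.
  move=> h [S [HS Sh]]; apply: (semF_mono (r := upd r X S)).
    apply: leE_upd => // k Sk; by exists S.
  exact: HS.
split; first exact: H1.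
move=> Hg; exists (semF f (upd r X M)); split=> // h Hh.
apply: (semF_mono (r := upd r X M)) => //; apply: leE_upd => // k; exact: H1.
Qed.

Lemma unfold_min X (f : form) (r : env) g :
  semF (Fmin X f) r g <-> semF f (upd r X (semF (Fmin X f) r)) g.
Proof.
set M := semF (Fmin X f) r.
have H1 : forall g, semF f (upd r X M) g -> M g.
  move=> h Hh S HS; apply: (HS); apply: (semF_mono (r := upd r X M)) => //.
  apply: leE_upd => // k Mk; exact: (Mk S HS).
split; last exact: H1.
move=> Mg; apply: Mg => h Hh; apply: (semF_mono (r := upd r X (semF f (upd r X M)))) => //.
apply: leE_upd => // k; exact: H1.
Qed.


Definition PC (L : tset) := forall g w, L g -> pre w g -> L (fin w).
Definition LC (L : tset) := forall g, (forall w, pre w g -> L (fin w)) -> L g.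
Definition Ext (L : tset) := forall g, L g -> exists w, pre w g /\ forall h, L (app w h).

Lemma PC_upd (r : env) X S : (forall Y, PC (r Y)) -> PC S -> forall Y, PC (upd r X S Y).
Proof. by move=> H HS Y; rewrite /upd; case: ifP. Qed.
Lemma LC_upd (r : env) X S : (forall Y, LC (r Y)) -> LC S -> forall Y, LC (upd r X S Y).
Proof. by move=> H HS Y; rewrite /upd; case: ifP. Qed.
Lemma Ext_upd (r : env) X S : (forall Y, Ext (r Y)) -> Ext S -> forall Y, Ext (upd r X S Y).
Proof. by move=> H HS Y; rewrite /upd; case: ifP. Qed.

Lemma PC_sem (f : form) : is_sHMLF f -> forall r, (forall Y, PC (r Y)) -> PC (semF f r).
Proof.
elim: f => [||f1 IH1 f2 IH2|f1 IH1 f2 IH2|A f1 IH|A f1 IH|X f1 IH|X f1 IH|X] //= Hs r Hr.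
all: try by [].
- case: Hs => H1 H2 g w [Hg|Hg] Hw; [left; exact: (IH1 H1 r Hr g)|right; exact: (IH2 H2 r Hr g)].
- case: Hs => H1 H2 g w [Hg1 Hg2] Hw; split; [exact: (IH1 H1 r Hr g)|exact: (IH2 H2 r Hr g)].
- move=> g [|b w] Hg /=.
    by move=> _ a g' _ E.
  case: g Hg => // c g' Hg [Ebc Hw] a g'' Ha [Eab <-]; subst.
  apply: (IH Hs r Hr g') => //; exact: (Hg a g' Ha).
-
  set M := semF (Fmax X f1) r.
  pose K : tset := fun x => exists h, M h /\ (x = h \/ exists w, x = fin w /\ pre w h).
  have PCK : PC K.
    move=> x u [h [Mh [->|[w [-> Hw]]]]] Hu; exists h; split=> //; right.
      by exists u.
    by exists u; split=> //; exact: pre_trans Hu Hw.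
  have MK : forall x, M x -> K x by move=> x Mx; exists x; split=> //; left.
  have KpF : forall x, K x -> semF f1 (upd r X K) x.
    have Hh : forall h, M h -> semF f1 (upd r X K) h.
      move=> h /unfold_max Hh; apply: (semF_mono (r := upd r X M)) => //.
      exact: leE_upd.
    move=> x [h [Mh [->|[w [-> Hw]]]]]; first exact: Hh.
    exact: (IH Hs _ (@PC_upd _ X _ Hr PCK) h w (Hh h Mh) Hw).
  have KM : forall x, K x -> M x by move=> x Kx; exists K; split.
  move=> g w Mg Hw; apply: KM; apply: PCK (MK _ Mg) Hw.
Qed.

Lemma LC_sem (f : form) : is_sHMLF f -> forall r, (forall Y, PC (r Y)) ->
  (forall Y, LC (r Y)) -> LC (semF f r).
Proof.
elim: f => [||f1 IH1 f2 IH2|f1 IH1 f2 IH2|A f1 IH|A f1 IH|X f1 IH|X f1 IH|X] //= Hs r Hp Hr.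
all: try by [].
- by move=> g /(_ [::] I).
- case: Hs => H1 H2 g Hg.
  have P1 := PC_sem H1 Hp; have P2 := PC_sem H2 Hp.
  have L1 := IH1 H1 r Hp Hr; have L2 := IH2 H2 r Hp Hr.
  apply: NNPP => /not_or_and [N1 N2].
  have [w1 Hn1] : exists w, ~ (pre w g -> semF f1 r (fin w)).
    apply: NNPP => Hn; apply: N1; apply: L1 => w Hw; apply: NNPP => Hc; apply: Hn; exists w; tauto.
  have [Hw1 Nw1] := imply_to_and _ _ Hn1.
  have [w2 Hn2] : exists w, ~ (pre w g -> semF f2 r (fin w)).
    apply: NNPP => Hn; apply: N2; apply: L2 => w Hw; apply: NNPP => Hc; apply: Hn; exists w; tauto.
  have [Hw2 Nw2] := imply_to_and _ _ Hn2.
  case: (leqP (size w1) (size w2)) => Hs12.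
    have Hp12 := pre_cmp_fin Hw1 Hw2 Hs12.
    case: (Hg w2 Hw2) => // H; apply: Nw1; exact: P1 H Hp12.
  have Hp21 := pre_cmp_fin Hw2 Hw1 (ltnW Hs12).
  case: (Hg w1 Hw1) => // H; apply: Nw2; exact: P2 H Hp21.
- case: Hs => H1 H2 g Hg; split; [apply: (IH1 H1 r Hp Hr) | apply: (IH2 H2 r Hp Hr)];
    by move=> w /Hg [].
- move=> g Hg a g' Ha Eg; subst g.
  apply: (IH Hs r Hp Hr) => w Hw.
  have := Hg (a :: w) (conj erefl Hw) a (fin w) Ha erefl; done.
- set M := semF (Fmax X f1) r.
  have PM : PC M := PC_sem (f := Fmax X f1) Hs Hp.
  pose M' : tset := fun x => forall w, pre w x -> M (fin w).
  have MM' : forall x, M x -> M' x by move=> x Mx w Hw; exact: PM Mx Hw.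
  have PM' : PC M'.
    move=> x u Hx Hu w Hw; apply: Hx; exact: pre_trans Hw Hu.
  have LM' : LC M'.
    move=> x Hx w0 Hw0; exact: (Hx w0 Hw0 w0 (pre_fin w0)).
  have M'F : forall x, M' x -> semF f1 (upd r X M') x.
    move=> x Hx; apply: (IH Hs _ (@PC_upd _ X _ Hp PM') (@LC_upd _ X _ Hr LM')) => w Hw.
    have /unfold_max H := Hx w Hw.
    apply: (semF_mono (r := upd r X M)) H; exact: leE_upd.
  move=> g Hg; exists M'; split=> //.
Qed.

Lemma Ext_sem (f : form) : is_cHMLF f -> forall r, (forall Y, Ext (r Y)) -> Ext (semF f r).
Proof.
elim: f => [||f1 IH1 f2 IH2|f1 IH1 f2 IH2|A f1 IH|A f1 IH|X f1 IH|X f1 IH|X] //= Hs r Hr.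
all: try by [].
- by move=> g _; exists [::].
- case: Hs => H1 H2 g [Hg|Hg].
    have [w [Hw Hh]] := IH1 H1 r Hr g Hg; exists w; split=> // h; left; exact: Hh.
  have [w [Hw Hh]] := IH2 H2 r Hr g Hg; exists w; split=> // h; right; exact: Hh.
- case: Hs => H1 H2 g [Hg1 Hg2].
  have [w1 [Hw1 Hh1]] := IH1 H1 r Hr g Hg1.
  have [w2 [Hw2 Hh2]] := IH2 H2 r Hr g Hg2.
  case: (leqP (size w1) (size w2)) => Hs12.
    have [v Ev] := pre_cmp Hw1 Hw2 Hs12.
    exists w2; split=> // h; split=> //; rewrite Ev app_cat; exact: Hh1.
  have [v Ev] := pre_cmp Hw2 Hw1 (ltnW Hs12).
  exists w1; split=> // h; split=> //; rewrite Ev app_cat; exact: Hh2.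
- move=> g [a [g' [Ha [-> Hg']]]].
  have [w [Hw Hh]] := IH Hs r Hr g' Hg'.
  exists (a :: w); split=> // h; exists a, (app w h); split=> //; split=> //.
- set M := semF (Fmin X f1) r.
  pose M' : tset := fun x => exists w, pre w x /\ forall h, M (app w h).
  have M'M : forall x, M' x -> M x by move=> x [w [Hw Hh]]; have [h ->] := pre_appE Hw.
  have EM' : Ext M'.
    move=> x [w [Hw Hh]]; exists w; split=> // h; exists w; split=> //; exact: pre_app.
  have FM' : forall x, semF f1 (upd r X M') x -> M' x.
    move=> x Hx; have [w [Hw Hh]] := IH Hs _ (@Ext_upd _ X _ Hr EM') x Hx.
    exists w; split=> // h; apply/unfold_min.
    apply: (semF_mono (r := upd r X M')) (Hh h); exact: leE_upd.
  move=> g Mg; exact: (Mg M' FM').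
Qed.


Fixpoint atoms (f : form) (r : env) : list tset :=
  semF f r :: match f with
  | For f1 f2 | Fand f1 f2 => (atoms f1 r ++ atoms f2 r)%list
  | Fdia _ g | Fbox _ g => atoms g r
  | Fmax X g => atoms g (upd r X (semF f r))
  | Fmin X g => atoms g (upd r X (semF f r))
  | _ => [::]
  end.

Lemma atoms_PC (f : form) : forall r, is_sHMLF f -> (forall Y, PC (r Y)) ->
  (forall Y, LC (r Y)) -> forall L, List.In L (atoms f r) -> PC L /\ LC L.
Proof.
elim: f => [||f1 IH1 f2 IH2|f1 IH1 f2 IH2|A f1 IH|A f1 IH|X f1 IH|X f1 IH|X] r Hs Hp Hl L;
  move=> [<-|/= HL]; try (split; [exact: PC_sem|exact: LC_sem]); try by [].
- case: Hs => H1 H2; case: (List.in_app_or _ _ _ HL); [exact: IH1|exact: IH2].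
- case: Hs => H1 H2; case: (List.in_app_or _ _ _ HL); [exact: IH1|exact: IH2].
- exact: IH HL.
- apply: (IH _ Hs _ _ _ HL).
    apply: PC_upd => //; exact: (PC_sem (f := Fmax X f1)).
  apply: LC_upd => //; [exact: (LC_sem (f := Fmax X f1))].
Qed.

Lemma atoms_Ext (f : form) : forall r, is_cHMLF f -> (forall Y, Ext (r Y)) ->
  forall L, List.In L (atoms f r) -> Ext L.
Proof.
elim: f => [||f1 IH1 f2 IH2|f1 IH1 f2 IH2|A f1 IH|A f1 IH|X f1 IH|X f1 IH|X] r Hs Hp L;
  move=> [<-|/= HL]; try exact: Ext_sem; try by [].
- case: Hs => H1 H2; case: (List.in_app_or _ _ _ HL); [exact: IH1|exact: IH2].
- case: Hs => H1 H2; case: (List.in_app_or _ _ _ HL); [exact: IH1|exact: IH2].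
- exact: IH HL.
- apply: (IH _ Hs _ _ HL); apply: Ext_upd => //; exact: (Ext_sem (f := Fmin X f1)).
Qed.


Lemma In_nth_ex (L : tset) (s : list tset) d :
  List.In L s -> exists i, i < size s /\ nth d s i = L.
Proof.
elim: s => [|x s IH] //= [->|/IH [i [Hi Ei]]]; first by exists 0.
by exists i.+1.
Qed.

Lemma nth_In (s : list tset) d i : i < size s -> List.In (nth d s i) s.
Proof. elim: s i => [|x s IH] [|i] //= Hi; [by left|right; exact: IH]. Qed.

Definition D (a : Act) (L : tset) : tset := fun g => L (tcons a g).

Section Dnf.
Variable A : list tset.
Notation N := (size A).
Definition atom (i : 'I_N) : tset := nth (fun _ => False) A i.
Definition evalD (P : {set {set 'I_N}}) : tset :=
  fun g => exists2 S, S \in P & forall i, i \in S -> atom i g.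
Definition Pos (L : tset) := exists P, forall g, L g <-> evalD P g.

Lemma Pos_ext L L' : (forall g, L g <-> L' g) -> Pos L -> Pos L'.
Proof. move=> H [P HP]; exists P => g; rewrite -H; exact: HP. Qed.

Lemma Pos0 : Pos (fun _ => False).
Proof. by exists set0 => g; split=> // [[S]]; rewrite in_set0. Qed.

Lemma PosT : Pos (fun _ => True).
Proof. exists [set set0] => g; split=> // _; exists set0; first by rewrite in_set1.
by move=> i; rewrite in_set0. Qed.

Lemma Pos_atom (L : tset) : List.In L A -> Pos L.
Proof.
move=> /(In_nth_ex (fun _ => False)) [i [Hi Ei]].
exists [set [set Ordinal Hi]] => g; split.
  move=> Lg; exists [set Ordinal Hi]; first by rewrite in_set1.
  by move=> j; rewrite in_set1 => /eqP ->; rewrite /atom /= Ei.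
case=> S; rewrite in_set1 => /eqP -> /(_ (Ordinal Hi)); rewrite in_set1 eqxx /atom /= Ei.
by apply.
Qed.

Lemma PosU L1 L2 : Pos L1 -> Pos L2 -> Pos (fun g => L1 g \/ L2 g).
Proof.
move=> [P HP] [Q HQ]; exists (P :|: Q) => g; rewrite HP HQ; split.
  by case=> [[S HS HS']|[S HS HS']]; exists S => //; rewrite in_setU HS ?orbT.
case=> S; rewrite in_setU => /orP [HS|HS] HS'; [left|right]; by exists S.
Qed.

Definition conjD (P Q : {set {set 'I_N}}) : {set {set 'I_N}} :=
  [set U | [exists S in P, [exists T in Q, U == S :|: T]]].

Lemma evalD_conj P Q g : evalD (conjD P Q) g <-> evalD P g /\ evalD Q g.
Proof.
split.
  case=> U; rewrite inE => /existsP [S /andP [HS /existsP [T /andP [HT /eqP EU]]]] HU.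
  split; [exists S => // i Hi|exists T => // i Hi]; apply: HU; by rewrite EU in_setU Hi ?orbT.
case=> [[S HS HS'] [T HT HT']]; exists (S :|: T).
  rewrite inE; apply/existsP; exists S; rewrite HS /=; apply/existsP; exists T; by rewrite HT eqxx.
by move=> i; rewrite in_setU => /orP [/HS'|/HT'].
Qed.

Lemma PosI L1 L2 : Pos L1 -> Pos L2 -> Pos (fun g => L1 g /\ L2 g).
Proof.
move=> [P HP] [Q HQ]; exists (conjD P Q) => g; rewrite evalD_conj HP HQ; done.
Qed.

Lemma Claim (f : form) : forall r, (forall L, List.In L (atoms f r) -> List.In L A) ->
  guarded f -> (forall Y, ~ guarded_in Y f -> forall a, Pos (D a (r Y))) ->
  forall a, Pos (D a (semF f r)).
Proof.
elim: f => [||f1 IH1 f2 IH2|f1 IH1 f2 IH2|B f1 IH|B f1 IH|X f1 IH|X f1 IH|X] r Hsub Hg Hy a.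
- exact: PosT.
- exact: Pos0.
- case: Hg => G1 G2; apply: PosU.
    apply: IH1 => // [L HL|Y HY]; [apply: Hsub; right; apply: List.in_or_app; left=> //|].
    apply: Hy => /= -[]; done.
  apply: IH2 => // [L HL|Y HY]; [apply: Hsub; right; apply: List.in_or_app; right=> //|].
  apply: Hy => /= -[]; done.
- case: Hg => G1 G2; apply: PosI.
    apply: IH1 => // [L HL|Y HY]; [apply: Hsub; right; apply: List.in_or_app; left=> //|].
    apply: Hy => /= -[]; done.
  apply: IH2 => // [L HL|Y HY]; [apply: Hsub; right; apply: List.in_or_app; right=> //|].
  apply: Hy => /= -[]; done.
- have HA : List.In (semF f1 r) A by apply: Hsub; right; case: (f1) => /=; left.
  case Ha: (a \in B).
    apply: Pos_ext (Pos_atom HA) => g; split.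
      by move=> H; exists a, g.
    by case=> b [g' [Hb [[Eb Eg] Hg0]]]; subst.
  apply: Pos_ext Pos0 => g; split=> //; case=> b [g' [Hb [[Eb _]]]]; by rewrite -Eb Ha in Hb.
- have HA : List.In (semF f1 r) A by apply: Hsub; right; case: (f1) => /=; left.
  case Ha: (a \in B).
    apply: Pos_ext (Pos_atom HA) => g; split.
      by move=> H b g' Hb [Eb Eg]; subst.
    by move=> H; apply: (H a g).
  apply: Pos_ext PosT => g; split=> // _ b g' Hb [Eb _]; by rewrite -Eb Ha in Hb.
- set M := semF (Fmin X f1) r.
  case: Hg => G1 G2.
  apply: (Pos_ext (L := D a (semF f1 (upd r X M)))).
    by move=> g; rewrite /D /M unfold_min.
  apply: IH => //.
    by move=> L HL; apply: Hsub; right.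
  move=> Y HY; rewrite /upd; case: eqP => [EY|NY].
    by subst Y.
  by apply: Hy => /= -[E|//]; apply: NY.
- set M := semF (Fmax X f1) r.
  case: Hg => G1 G2.
  apply: (Pos_ext (L := D a (semF f1 (upd r X M)))).
    by move=> g; rewrite /D /M unfold_max.
  apply: IH => //.
    by move=> L HL; apply: Hsub; right.
  move=> Y HY; rewrite /upd; case: eqP => [EY|NY].
    by subst Y.
  by apply: Hy => /= -[E|//]; apply: NY.
- by apply: Hy => /=.
Qed.


Lemma AllPos (f : form) : forall r, (forall L, List.In L (atoms f r) -> List.In L A) ->
  guarded f -> (forall Y a, Pos (D a (r Y))) ->
  forall L, List.In L (atoms f r) -> forall a, Pos (D a L).
Proof.
elim: f => [||f1 IH1 f2 IH2|f1 IH1 f2 IH2|B f1 IH|B f1 IH|X f1 IH|X f1 IH|X] r Hsub Hg Hy L;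
  move=> [<-|/= HL]; try (apply: Claim => // Y _; exact: Hy); try by [].
- case: Hg => G1 G2; case: (List.in_app_or _ _ _ HL) => HL'.
    apply: IH1 => // L' HL''; apply: Hsub; right; apply: List.in_or_app; by left.
  apply: IH2 => // L' HL''; apply: Hsub; right; apply: List.in_or_app; by right.
- case: Hg => G1 G2; case: (List.in_app_or _ _ _ HL) => HL'.
    apply: IH1 => // L' HL''; apply: Hsub; right; apply: List.in_or_app; by left.
  apply: IH2 => // L' HL''; apply: Hsub; right; apply: List.in_or_app; by right.
- apply: IH HL => // L' HL''; apply: Hsub; by right.
- apply: IH HL => // L' HL''; apply: Hsub; by right.
- case: Hg => G1 G2; apply: IH HL => //.
    move=> L' HL''; apply: Hsub; by right.
  move=> Y a; rewrite /upd; case: ifP => _ //.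
  apply: (Claim (f := Fmin X f1)); last first.
  + by move=> Y' _; exact: Hy.
  + by split.
  + by move=> L' [<-|HL'']; apply: Hsub; [left|right].
- case: Hg => G1 G2; apply: IH HL => //.
    move=> L' HL''; apply: Hsub; by right.
  move=> Y a; rewrite /upd; case: ifP => _ //.
  apply: (Claim (f := Fmax X f1)); last first.
  + by move=> Y' _; exact: Hy.
  + by split.
  + by move=> L' [<-|HL'']; apply: Hsub; [left|right].
Qed.

Lemma atom_In (i : 'I_N) : List.In (atom i) A.
Proof. exact: nth_In. Qed.

Lemma evalD_PC P : (forall L, List.In L A -> PC L) -> PC (evalD P).
Proof.
move=> H g w [S HS HS'] Hw; exists S => // i Hi; apply: (H _ (atom_In i)) (HS' i Hi) Hw.
Qed.

Lemma evalD_LC P : (forall L, List.In L A -> PC L /\ LC L) -> LC (evalD P).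
Proof.
move=> H g Hg; apply: NNPP => Ng.
have key : forall l : seq {set 'I_N}, (forall S, S \in l -> S \in P) ->
    exists w, pre w g /\ forall S, S \in l -> ~ (forall i, i \in S -> atom i (fin w)).
  elim=> [|S l IH] Hl; first by exists [::].
  have [w1 [Hw1 H1]] := IH (fun S' HS' => Hl S' ltac:(by rewrite inE HS' orbT)).
  have HS : S \in P by apply: Hl; rewrite inE eqxx.
  have [w2 [Hw2 H2]] : exists w, pre w g /\ ~ (forall i, i \in S -> atom i (fin w)).
    apply: NNPP => Hn; apply: Ng; exists S => // i Hi.
    apply: (proj2 (H _ (atom_In i))) => w Hw; apply: NNPP => Hc; apply: Hn.
    exists w; split=> // Hall; apply: Hc; exact: Hall.
  have mono : forall (S' : {set 'I_N}) u v, pre u g -> pre v g -> size u <= size v ->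
      (forall i, i \in S' -> atom i (fin v)) -> (forall i, i \in S' -> atom i (fin u)).
    move=> S' u v Hu Hv Huv Hall i Hi.
    exact: (proj1 (H _ (atom_In i))) (Hall i Hi) (pre_cmp_fin Hu Hv Huv).
  case: (leqP (size w1) (size w2)) => Hs.
    exists w2; split=> // S'; rewrite inE => /orP [/eqP ->//|HS'] Hall.
    exact: H1 HS' (mono _ _ _ Hw1 Hw2 Hs Hall).
  exists w1; split=> // S'; rewrite inE => /orP [/eqP ->|HS'] Hall; last exact: H1 HS' Hall.
  exact: H2 (mono _ _ _ Hw2 Hw1 (ltnW Hs) Hall).
have [w [Hw Hall]] := key (enum P) (fun S => ltac:(by rewrite mem_enum)).
have [S HS HS'] := Hg w Hw; apply: (Hall S) => //; by rewrite mem_enum.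
Qed.

Lemma evalD_Ext P : (forall L, List.In L A -> Ext L) -> Ext (evalD P).
Proof.
move=> H g [S HS HS'].
have key : forall l : seq 'I_N, exists w, pre w g /\ forall h i, i \in l -> i \in S -> atom i (app w h).
  elim=> [|i l [w1 [Hw1 H1]]]; first by exists [::].
  case HiS: (i \in S); last first.
    exists w1; split=> // h j; rewrite inE => /orP [/eqP ->|Hj]; [by rewrite HiS | exact: H1].
  have [w2 [Hw2 H2]] := H _ (atom_In i) g (HS' i HiS).
  case: (leqP (size w1) (size w2)) => Hs.
    have [v Ev] := pre_cmp Hw1 Hw2 Hs.
    exists w2; split=> // h j; rewrite inE => /orP [/eqP -> _|Hj HjS]; first exact: H2.
    rewrite Ev app_cat; exact: H1.
  have [v Ev] := pre_cmp Hw2 Hw1 (ltnW Hs).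
  exists w1; split=> // h j; rewrite inE => /orP [/eqP -> _|Hj HjS]; last exact: H1.
  rewrite Ev app_cat; exact: H2.
have [w [Hw Hh]] := key (enum S).
exists w; split=> // h; exists S => // i Hi; apply: Hh => //; by rewrite mem_enum.
Qed.

Definition pb (P : Prop) : bool := if excluded_middle_informative P then true else false.
Lemma pbP (P : Prop) : pb P <-> P.
Proof. by rewrite /pb; case: excluded_middle_informative. Qed.

Section Delta.
Variable B : 'I_N -> Act -> {set {set 'I_N}}.
Hypothesis HB : forall i a g, atom i (tcons a g) <-> evalD (B i a) g.

Definition deltaD (P : {set {set 'I_N}}) (a : Act) : {set {set 'I_N}} :=
  [set T : {set 'I_N} | [exists S in P, [forall i in S, [exists U in B i a, U \subset T]]]].

Lemma evalD_delta P a g : evalD (deltaD P a) g <-> evalD P (tcons a g).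
Proof.
split.
  case=> T; rewrite inE => /existsP [S /andP [HS /forallP HS']] HT.
  exists S => // i Hi; apply/HB.
  have /implyP /(_ Hi) /existsP [U /andP [HU /subsetP sUT]] := HS' i.
  exists U => // j Hj; apply: HT; exact: sUT.
case=> S HS HS'.
exists [set j | pb (atom j g)]; last by move=> j; rewrite inE => /pbP.
rewrite inE; apply/existsP; exists S; rewrite HS /=; apply/forallP => i; apply/implyP => Hi.
have [U HU HU'] := proj1 (HB i a g) (HS' i Hi).
apply/existsP; exists U; rewrite HU /=; apply/subsetP => j Hj; rewrite inE; apply/pbP; exact: HU'.
Qed.

End Delta.

End Dnf.


Section Auto.
Variable Q : finType.
Variable t : Q -> Act -> Q.

Definition code (q : Q) : nat := enum_rank q.
Lemma code_inj : injective code.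
Proof. by move=> x y /val_inj /enum_rank_inj. Qed.
Lemma code_eq q q' : (code q == code q') = (q == q').
Proof. by apply/eqP/eqP => [/code_inj|->]. Qed.

Lemma uniq_card (V : seq Q) : uniq V -> size V <= #|Q|.
Proof. move/card_uniqP <-; exact: max_card. Qed.

Lemma sem_bigAnd (h : Act -> form) (s : seq Act) r g :
  semF (foldr (@Fand Act) (Ftt Act) (map h s)) r g <-> forall a, a \in s -> semF (h a) r g.
Proof.
elim: s => [|b s IH] /=; first by split.
split.
  case=> H1 /IH H2 a; rewrite inE => /orP [/eqP ->//|]; exact: H2.
move=> H; split; first by apply: H; rewrite inE eqxx.
apply/IH => a Ha; apply: H; by rewrite inE Ha orbT.
Qed.

Lemma sem_bigOr (h : Act -> form) (s : seq Act) r g :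
  semF (foldr (@For Act) (Fff Act) (map h s)) r g <-> exists2 a, a \in s & semF (h a) r g.
Proof.
elim: s => [|b s IH] /=; first by split=> // [[a]].
split.
  case=> [H|/IH [a Ha H]]; [exists b => //; by rewrite inE eqxx|exists a => //; by rewrite inE Ha orbT].
case=> a; rewrite inE => /orP [/eqP ->|Ha] H; [by left|right; apply/IH; by exists a].
Qed.

Lemma free_big (op : form -> form -> form) (z : form) (h : Act -> form) (s : seq Act) X :
  (forall f1 f2, free_in X (op f1 f2) -> free_in X f1 \/ free_in X f2) -> ~ free_in X z ->
  free_in X (foldr op z (map h s)) -> exists a, free_in X (h a).
Proof.
move=> Hop Hz; elim: s => [|b s IH] /=; first by [].
by case/Hop => [H|/IH]; [exists b|].
Qed.

Section Safety.
Variable ok : Q -> bool.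

Fixpoint Fs (fuel : nat) (V : seq Q) (q : Q) : form :=
  if ~~ ok q then Fff Act else if q \in V then Fvar Act (code q) else
  match fuel with
  | 0 => Fff Act
  | k.+1 => Fmax (code q) (foldr (@Fand Act) (Ftt Act)
               (map (fun a => Fbox [set a] (Fs k (q :: V) (t q a))) (enum Act)))
  end.

Fixpoint badn (n : nat) (q : Q) (g : trace) : Prop :=
  ~~ ok q \/ match n with 0 => False | n'.+1 =>
    exists a g', g = tcons a g' /\ badn n' (t q a) g' end.

Lemma S1 fuel : forall V q (r : env), uniq V -> #|Q| <= size V + fuel ->
  (forall q', q' \in V -> forall h, (forall n, ~ badn n q' h) -> r (code q') h) ->
  forall g, (forall n, ~ badn n q g) -> semF (Fs fuel V q) r g.
Proof.
elim: fuel => [|k IH] V q r HU Hc Hr g Hg /=.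
  case Hok: (ok q) => /=; last by case: (Hg 0); left; rewrite Hok.
  case HqV: (q \in V) => /=; first exact: Hr.
  have := uniq_card (V := q :: V); rewrite /= HqV HU /= => /(_ isT) H.
  by rewrite addn0 in Hc; have := leq_trans H Hc; rewrite ltnn.
case Hok: (ok q) => /=; last by case: (Hg 0); left; rewrite Hok.
case HqV: (q \in V) => /=; first exact: Hr.
exists (fun h => forall n, ~ badn n q h); split=> // h Hh.
apply/sem_bigAnd => a _ b g' /set1P -> Eh; subst h.
apply: IH => //=.
- by rewrite HqV.
- by rewrite addSnnS.
- move=> q'; rewrite inE => /orP [/eqP ->|Hq'] h Hh'.
    by rewrite /upd eqxx.
  rewrite /upd code_eq; case: eqP => [E|_]; first by subst q'.
  exact: Hr.
- move=> n Hn; apply: (Hh n.+1); right; by exists a, g'.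
Qed.

Lemma S2 N : forall n, n <= N -> forall fuel V q (r : env) g, badn n q g ->
  semF (Fs fuel V q) r g ->
  exists q', q' \in V /\ exists m h, m <= n /\ r (code q') h /\ badn m q' h.
Proof.
elim: N => [|N IHN] n Hn fuel V q r g Hb.
all: case: fuel => [|k] /=; case Hok: (ok q) => //=; case HqV: (q \in V) => //=;
  try by move=> H; exists q; split=> //; exists n, g.
all: case: n Hn Hb => [|n'] Hn Hb; try by case: Hb => [|//]; rewrite Hok.
all: try by [].
case: Hb; first by rewrite Hok.
case=> a [g' [Eg Hb']] [S [HS Sg]].
have := HS g Sg => /sem_bigAnd /(_ a (mem_enum _ a)) /(_ a g' (set11 a) Eg) H.
have [q'' [Hq'' [m [h [Hm [Hr Hb'']]]]]] := IHN n' Hn _ _ _ _ _ Hb' H.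
move: Hq''; rewrite inE => /orP [/eqP Eq|Hq''].
  subst q''; move: Hr; rewrite /upd eqxx => Sh.
  have Hsem : semF (Fs k.+1 V q) r h.
    rewrite /= Hok HqV /=; exists S; split=> //.
  have [q3 [Hq3 [m' [h' [Hm' [Hr' Hb3]]]]]] :=
    IHN m (leq_trans Hm Hn) _ _ _ _ _ Hb'' Hsem.
  exists q3; split=> //; exists m', h'; split=> //.
  exact: leq_trans Hm' (leq_trans Hm (leqnSn n')).
exists q''; split=> //; exists m, h; split; first exact: leq_trans Hm (leqnSn n').
split=> //; move: Hr; rewrite /upd code_eq; case: eqP => // E; subst q''.
by rewrite HqV in Hq''.
Qed.

Lemma Fs_correct q0 g :
  semF (Fs #|Q| [::] q0) (@empty_env Act) g <-> forall n, ~ badn n q0 g.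
Proof.
split.
  move=> H n Hb; have [q' [//]] := S2 (leqnn n) Hb H.
move=> H; apply: S1 => //.
Qed.

Lemma Fs_free fuel : forall V q X, free_in X (Fs fuel V q) -> exists2 q', q' \in V & X = code q'.
Proof.
elim: fuel => [|k IH] V q X /=; case: (ok q) => //=; case HqV: (q \in V) => //=;
  try by move=> <-; exists q.
case=> NX Hf.
have [||a /IH [q' Hq' EX]] := free_big _ _ Hf; try by [].
move: Hq'; rewrite inE => /orP [/eqP E|Hq']; last by exists q'.
by subst; case: NX.
Qed.

Lemma Fs_good fuel : forall V q, guarded (Fs fuel V q) /\ is_sHML (Fs fuel V q).
Proof.
elim: fuel => [|k IH] V q /=; case: (ok q) => //=; case HqV: (q \in V) => //=.
split.
  split.
    by elim: (enum Act) => //= a s IHs.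
  by elim: (enum Act) => //= a s IHs; split=> //; case: (IH (q :: V) (t q a)).
by elim: (enum Act) => //= a s IHs; split=> //; case: (IH (q :: V) (t q a)).
Qed.

End Safety.


Section Guar.
Variable acc : Q -> bool.

Fixpoint Fc (fuel : nat) (V : seq Q) (q : Q) : form :=
  if acc q then Ftt Act else if q \in V then Fvar Act (code q) else
  match fuel with
  | 0 => Fff Act
  | k.+1 => Fmin (code q) (foldr (@For Act) (Fff Act)
               (map (fun a => Fdia [set a] (Fc k (q :: V) (t q a))) (enum Act)))
  end.

Fixpoint goodn (n : nat) (q : Q) (g : trace) : Prop :=
  acc q \/ match n with 0 => False | n'.+1 =>
    exists a g', g = tcons a g' /\ goodn n' (t q a) g' end.

Lemma C1 fuel : forall V q (r : env),
  (forall q', q' \in V -> forall h, r (code q') h -> exists n, goodn n q' h) ->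
  forall g, semF (Fc fuel V q) r g -> exists n, goodn n q g.
Proof.
elim: fuel => [|k IH] V q r Hr g /=.
  case Hacc: (acc q) => /=; first by exists 0; left.
  case HqV: (q \in V) => //=; exact: Hr.
case Hacc: (acc q) => /=; first by exists 0; left.
case HqV: (q \in V) => /=; first exact: Hr.
move=> Hm; apply: (Hm (fun h => exists n, goodn n q h)).
move=> h /sem_bigOr [a _ [b [g' [/set1P Eb [Eh Hg']]]]]; subst b h.
have Henv : forall q', q' \in q :: V -> forall h,
    upd r (code q) (fun h => exists n, goodn n q h) (code q') h -> exists n, goodn n q' h.
  move=> q' Hq' h; move: Hq'; rewrite inE => /orP [/eqP ->|Hq'].
    by rewrite /upd eqxx.
  rewrite /upd code_eq; case: eqP => [E|_]; first by subst q'.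
  exact: Hr.
have [n Hn] := IH (q :: V) (t q a) _ Henv g' Hg'.
by exists n.+1; right; exists a, g'.
Qed.

Lemma C2 N : forall n, n <= N -> forall fuel V q (r : env) g, uniq V -> #|Q| <= size V + fuel ->
  goodn n q g ->
  semF (Fc fuel V q) r g \/
  exists q', q' \in V /\ exists m h, m <= n /\ goodn m q' h /\ ~ r (code q') h.
Proof.
elim: N => [|N IHN] n Hn fuel V q r g HU Hc Hg.
all: case Hacc: (acc q); first by left; case: fuel {Hc} => /=; rewrite Hacc.
all: case HqV: (q \in V).
1,3: case: fuel {Hc} => [|k] /=; rewrite Hacc HqV /=;
    (case: (classic (r (code q) g)) => H; [by left|right; exists q; split=> //; by exists n, g]).
all: case: fuel Hc => [|k] Hc.
1,3: have := uniq_card (V := q :: V); rewrite /= HqV HU /= => /(_ isT) H;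
     by rewrite addn0 in Hc; have := leq_trans H Hc; rewrite ltnn.
all: case: n Hn Hg => [|n'] Hn Hg; first by case: Hg => [|//]; rewrite Hacc.
  by [].
case: Hg => [|[a [g' [Eg Hg']]]]; first by rewrite Hacc.
case: (classic (exists q', q' \in V /\ exists m h, m <= n'.+1 /\ goodn m q' h /\ ~ r (code q') h))
  => Hw; first by right.
left; rewrite /= Hacc HqV /= => S HS.
have Hc' : #|Q| <= size (q :: V) + k by rewrite /= addSnnS.
have HU' : uniq (q :: V) by rewrite /= HqV HU.
case: (IHN n' Hn k (q :: V) (t q a) (upd r (code q) S) g' HU' Hc' Hg') => [H|].
  apply: HS; apply/sem_bigOr; exists a; first exact: mem_enum.
  by exists a, g'; split; [exact: set11|split].
case=> q'' [Hq'' [m [h [Hm [Hgh Nr]]]]].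
move: Hq''; rewrite inE => /orP [/eqP Eq|Hq''].
  subst q''; move: Nr; rewrite /upd eqxx => NS.
  have Hm' : m <= N by exact: leq_trans Hm Hn.
  case: (IHN m Hm' k.+1 V q r h HU Hc Hgh) => [Hsem|[q3 [Hq3 [m' [h' [Hm3 [Hg3 Nr3]]]]]]].
    by case: NS; move: Hsem; rewrite /= Hacc HqV /= => /(_ S HS).
  case: Hw; exists q3; split=> //; exists m', h'; split=> //.
  exact: leq_trans Hm3 (leq_trans Hm (leqnSn n')).
case: Hw; exists q''; split=> //; exists m, h; split; first exact: leq_trans Hm (leqnSn n').
split=> //; move: Nr; rewrite /upd code_eq; case: eqP => // E; subst q''.
by rewrite HqV in Hq''.
Qed.

Lemma Fc_correct q0 g :
  semF (Fc #|Q| [::] q0) (@empty_env Act) g <-> exists n, goodn n q0 g.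
Proof.
split.
  by apply: C1.
case=> n Hn; case: (@C2 n n (leqnn n) #|Q| [::] q0 (@empty_env Act) g isT ltac:(by rewrite add0n) Hn) => //.
by case=> q' [].
Qed.

Lemma Fc_free fuel : forall V q X, free_in X (Fc fuel V q) -> exists2 q', q' \in V & X = code q'.
Proof.
elim: fuel => [|k IH] V q X /=; case: (acc q) => //=; case HqV: (q \in V) => //=;
  try by move=> <-; exists q.
case=> NX Hf.
have [||a /IH [q' Hq' EX]] := free_big _ _ Hf; try by [].
move: Hq'; rewrite inE => /orP [/eqP E|Hq']; last by exists q'.
by subst; case: NX.
Qed.

Lemma Fc_good fuel : forall V q, guarded (Fc fuel V q) /\ is_cHML (Fc fuel V q).
Proof.
elim: fuel => [|k IH] V q /=; case: (acc q) => //=; case HqV: (q \in V) => //=.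
split.
  split.
    by elim: (enum Act) => //= a s IHs.
  by elim: (enum Act) => //= a s IHs; split=> //; case: (IH (q :: V) (t q a)).
by elim: (enum Act) => //= a s IHs; split=> //; case: (IH (q :: V) (t q a)).
Qed.

End Guar.

End Auto.


Section Final.
Variable A : list tset.
Variable B : 'I_(size A) -> Act -> {set {set 'I_(size A)}}.
Hypothesis HB : forall i a g, atom i (tcons a g) <-> evalD (B i a) g.

Definition okD (P : {set {set 'I_(size A)}}) := pb (evalD P (tnil Act)).
Definition accD (P : {set {set 'I_(size A)}}) := pb (forall g, evalD P g).

Lemma safe_lang P g : (forall L, List.In L A -> PC L /\ LC L) ->
  (evalD P g <-> forall n, ~ badn (deltaD B) okD n P g).
Proof.
move=> HA; split.
  move=> HP n; elim: n P g HP => [|n IH] P g HP /=.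
    case=> // /negP; apply; apply/pbP; exact: (evalD_PC (fun L H => proj1 (HA L H))) HP (I : pre [::] g).
  case=> [/negP|[a [g' [Eg Hb]]]].
    apply; apply/pbP; exact: (evalD_PC (fun L H => proj1 (HA L H))) HP (I : pre [::] g).
  subst g; apply: IH Hb; apply/(evalD_delta HB); exact: HP.
move=> H; apply: (@evalD_LC A P HA g) => w.
elim: w P g H => [|a w IH] P g H /=.
  move=> _; apply/pbP; apply: negbNE; apply/negP => Hn; apply: (H 0); by left.
case: g H => // b g' H [Eab Hw]; subst b.
apply/(evalD_delta HB); apply: IH Hw => n Hn; apply: (H n.+1); right; by exists a, g'.
Qed.

Lemma guar_lang P g : (forall L, List.In L A -> Ext L) ->
  (evalD P g <-> exists n, goodn (deltaD B) accD n P g).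
Proof.
move=> HA; split; last first.
  case=> n; elim: n P g => [|n IH] P g /=.
    by case=> // /pbP.
  case=> [/pbP //|[a [g' [-> Hg']]]]; apply/(evalD_delta HB); exact: IH Hg'.
move=> /(evalD_Ext HA) [w [Hw Hh]].
elim: w P g Hw Hh => [|a w IH] P g Hw Hh.
  by exists 0; left; apply/pbP.
case: g Hw => // b g' [Eab Hw]; subst b.
have [n Hn] := IH (deltaD B P a) g' Hw (fun h => proj2 (evalD_delta HB P a (app w h)) (Hh h)).
by exists n.+1; right; exists a, g'.
Qed.

End Final.

Lemma atoms_cons (f : form) r : atoms f r = semF f r :: behead (atoms f r).
Proof. by case: f. Qed.

Lemma empty_PC : forall Y, PC ((@empty_env Act) Y).
Proof. by move=> Y g w []. Qed.
Lemma empty_LC : forall Y, LC ((@empty_env Act) Y).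
Proof. by move=> Y g /(_ [::] I). Qed.
Lemma empty_Ext : forall Y, Ext ((@empty_env Act) Y).
Proof. by move=> Y g []. Qed.

Lemma main_common (phi : form) : guarded phi ->
  exists (A : list tset) (B : 'I_(size A) -> Act -> {set {set 'I_(size A)}}) (i0 : 'I_(size A)),
    (forall L, List.In L A <-> List.In L (atoms phi (@empty_env Act))) /\
    (forall i a g, atom i (tcons a g) <-> evalD (B i a) g) /\
    atom i0 = semF phi (@empty_env Act).
Proof.
move=> Hg; set A := atoms phi (@empty_env Act).
have HPos : forall L, List.In L A -> forall a, Pos A (D a L).
  apply: (AllPos (f := phi)) => // Y a; apply: Pos_ext (Pos0 A) => g; done.
pose B := fun (i : 'I_(size A)) a =>
  proj1_sig (constructive_indefinite_description _ (HPos (atom i) (atom_In i) a)).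
have HB : forall i a g, atom i (tcons a g) <-> evalD (B i a) g.
  move=> i a g; exact: (proj2_sig (constructive_indefinite_description _ (HPos (atom i) (atom_In i) a)) g).
have H0 : 0 < size A by rewrite /A atoms_cons.
exists A, B, (Ordinal H0); split=> //; split=> //.
by rewrite /atom /= /A atoms_cons.
Qed.

Lemma sHML_part (phi : form) : guarded phi -> closedF phi -> is_sHMLF phi ->
  exists psi : form, is_sHML psi /\ guarded psi /\ closedF psi /\
    forall g, semF psi (@empty_env Act) g <-> semF phi (@empty_env Act) g.
Proof.
move=> Hg Hc Hs.
have [A [B [i0 [HA [HB Hi0]]]]] := main_common Hg.
have HPC : forall L, List.In L A -> PC L /\ LC L.
  move=> L /HA; apply: atoms_PC => //; [exact: empty_PC|exact: empty_LC].
pose q0 : {set {set 'I_(size A)}} := [set [set i0]].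
exists (Fs (deltaD B) (@okD A) #|{set {set 'I_(size A)}}| [::] q0).
have [G1 G2] := Fs_good (deltaD B) (@okD A) #|{set {set 'I_(size A)}}| [::] q0.
split=> //; split=> //; split.
  by move=> X /Fs_free [].
move=> g; rewrite Fs_correct -(safe_lang HB q0 g HPC) -Hi0; split.
  case=> S; rewrite in_set1 => /eqP -> /(_ i0); rewrite in_set1 eqxx; by apply.
move=> H; exists [set i0]; first by rewrite in_set1.
by move=> i; rewrite in_set1 => /eqP ->.
Qed.

Lemma cHML_part (phi : form) : guarded phi -> closedF phi -> is_cHMLF phi ->
  exists psi : form, is_cHML psi /\ guarded psi /\ closedF psi /\
    forall g, semF psi (@empty_env Act) g <-> semF phi (@empty_env Act) g.
Proof.
move=> Hg Hc Hs.
have [A [B [i0 [HA [HB Hi0]]]]] := main_common Hg.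
have HE : forall L, List.In L A -> Ext L.
  move=> L /HA; apply: atoms_Ext => //; exact: empty_Ext.
pose q0 : {set {set 'I_(size A)}} := [set [set i0]].
exists (Fc (deltaD B) (@accD A) #|{set {set 'I_(size A)}}| [::] q0).
have [G1 G2] := Fc_good (deltaD B) (@accD A) #|{set {set 'I_(size A)}}| [::] q0.
split=> //; split=> //; split.
  by move=> X /Fc_free [].
move=> g; rewrite Fc_correct -(guar_lang HB q0 g HE) -Hi0; split.
  case=> S; rewrite in_set1 => /eqP -> /(_ i0); rewrite in_set1 eqxx; by apply.
move=> H; exists [set i0]; first by rewrite in_set1.
by move=> i; rewrite in_set1 => /eqP ->.
Qed.

End Proof.

Theorem mainTheorem14 (Act : finType) :
  (forall phi : form Act, guarded phi -> closedF phi -> is_sHMLF phi ->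
     exists psi : form Act, is_sHML psi /\ guarded psi /\ closedF psi /\
       forall g, semF psi (@empty_env Act) g <-> semF phi (@empty_env Act) g) /\
  (forall phi : form Act, guarded phi -> closedF phi -> is_cHMLF phi ->
     exists psi : form Act, is_cHML psi /\ guarded psi /\ closedF psi /\
       forall g, semF psi (@empty_env Act) g <-> semF phi (@empty_env Act) g).
Proof.
split; [exact: sHML_part | exact: cHML_part].
Qed.
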